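(* Fix an iteration $t$ and a slicing set $\mathcal U=\{u_i\}_{i=1}^m\subset\mathbb S^{d-1}$. Assume per-example gradients are $\ell_2$-clipped at radius $C>0$, the minibatch size $B_t\ge1$ is deterministic, and the slice-wise Lipschitz condition holds with constants $\{L_{t,i}\}_{i=1}^m$. Let $\overline K_t^2$ be a scalar such that for all $\theta\in\Theta$, $(s_i,s_j)\in\mathcal Q$, histories $y_{<t}$ in the support and couplings $\gamma\in\Pi(\mu^\theta_{s_i},\mu^\theta_{s_j})$, for $\gamma$-almost every $(X,X')$, $\mathbb E_{R_t}[K_t(X,X';R_t)^2]\le\overline K_t^2$. Then the vector $h^{\mathsf{sa}}_t=(h^{\mathsf{sa}}_{t,i})_{i=1}^m$ with \[ h^{\mathsf{sa}}_{t,i}:=\left(\frac{2L_{t,i}C}{B_t}\right)^2\overline K_t^2 \] is a valid subsampling-aware HUC (sa-HUC) for $\mathcal U$ at iteration $t$.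
   Context: Pufferfish scenario $(\mathcal S,\mathcal Q,\Theta)$: each $\theta\in\Theta$ is a joint law of a secret $S$ and a dataset $X=(X_1,\dots,X_n)\in\bar{\mathcal X}^n$; $\mu^\theta_s$ is the law of $X$ given $S=s$ under $\theta$; $\Pi(\mu,\nu)$ denotes couplings. At iteration $t$, subsampling randomness $R_t\sim\mathbb P_{\eta,\rho}$ (independent of data and secret) selects an index (multi)set $\mathsf I_t(R_t)\subseteq[n]$ of size $B_t$. A history $y_{<t}$ contains the parameter $\xi_{t-1}$. Clipped per-example gradients $\tilde g_t(x_j)=g_t(x_j)\min\{1,C/\|g_t(x_j)\|_2\}$ with $g_t(x_j)=\nabla_\xi\ell(\xi_{t-1};x_j)$; $\bar g_t(x;r)=\frac1{B_t}\sum_{j\in\mathsf I_t(r)}\tilde g_t(x_j)$; pre-noise update $f_t(x,y_{<t};r)=T_t(\bar g_t(x;r);y_{<t})$ with update map $T_t$. Discrepancy $K_t(x,x';r)=\sum_{j\in\mathsf I_t(r)}\mathbf 1\{x_j\ne x'_j\}$. Slice-wise Lipschitz condition: $|u_i^\top(T_t(z;y_{<t})-T_t(z';y_{<t}))|\le L_{t,i}|u_i^\top(z-z')|$ for all $z,z'$ and histories $y_{<t}$ in the support. sa-HUC: $h^{\mathsf{sa}}_t\in\mathbb R^m_+$ is an sa-HUC for $\mathcal U$ at iteration $t$ if for all $\theta\in\Theta$, $(s_i,s_j)\in\mathcal Q$, histories $y_{<t}$ in the support and every coupling $\gamma\in\Pi(\mu^\theta_{s_i},\mu^\theta_{s_j})$,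 for $\gamma$-almost every $(X,X')$ and all $i\in[m]$, $\mathbb E_{R_t}[|\langle f_t(X,y_{<t};R_t)-f_t(X',y_{<t};R_t),u_i\rangle|^2]\le h^{\mathsf{sa}}_{t,i}$, the expectation being only over $R_t\sim\mathbb P_{\eta,\rho}$. *)

(* Defs.v *)
From HB Require Import structures.
From mathcomp Require Import all_boot all_order all_algebra.
From mathcomp Require Import all_classical all_reals all_analysis.
Set Implicit Arguments. Unset Strict Implicit. Unset Printing Implicit Defensive.
Import Order.TTheory GRing.Theory Num.Theory.
Local Open Scope classical_set_scope.
Local Open Scope ring_scope.

Section SaHUC.
Variables (R : realType) (d : nat).

Definition dotv (u v : 'rV[R]_d) : R := \sum_(k < d) u ord0 k * v ord0 k.
Definition norm2 (v : 'rV[R]_d) : R := Num.sqrt (dotv v v).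
Definition on_sphere (u : 'rV[R]_d) : Prop := norm2 u = 1.

Definition clip (C : R) (g : 'rV[R]_d) : 'rV[R]_d :=
  Num.min 1 (C / norm2 g) *: g.

Variables (dX : measure_display) (Xbar : measurableType dX) (n : nat).
Variables (Hist : Type) (dO : measure_display) (Omega : measurableType dO).

(* ingredients of iteration t:
   xi    : history -> parameter xi_{t-1} contained in it
   gradl : xi -> x -> grad_xi loss(xi; x)   (per-example gradient)
   T     : update map T_t(z ; y_<t)
   I     : r -> index multiset I_t(r) (as a sequence) *)
Definition clipped_grad (C : R) (xi : Hist -> 'rV[R]_d)
  (gradl : 'rV[R]_d -> Xbar -> 'rV[R]_d) (y : Hist) (xj : Xbar) : 'rV[R]_d :=
  clip C (gradl (xi y) xj).

Definition minibatch_grad (C : R) (B : nat) (xi : Hist -> 'rV[R]_d)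
  (gradl : 'rV[R]_d -> Xbar -> 'rV[R]_d) (I : Omega -> seq 'I_n)
  (x : n.-tuple Xbar) (y : Hist) (r : Omega) : 'rV[R]_d :=
  (B%:R)^-1 *: \sum_(j <- I r) clipped_grad C xi gradl y (tnth x j).

Definition pre_noise_update (T : 'rV[R]_d -> Hist -> 'rV[R]_d) (C : R) (B : nat)
  (xi : Hist -> 'rV[R]_d) (gradl : 'rV[R]_d -> Xbar -> 'rV[R]_d)
  (I : Omega -> seq 'I_n) (x : n.-tuple Xbar) (y : Hist) (r : Omega)
  : 'rV[R]_d :=
  T (minibatch_grad C B xi gradl I x y r) y.

Definition discrepancy (I : Omega -> seq 'I_n) (x x' : n.-tuple Xbar)
  (r : Omega) : R :=
  \sum_(j <- I r) ((tnth x j != tnth x' j)%:R : R).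

Definition slicewise_lipschitz (m : nat) (u : 'I_m -> 'rV[R]_d) (L : 'I_m -> R)
  (T : 'rV[R]_d -> Hist -> 'rV[R]_d) (Hsupp : set Hist) : Prop :=
  forall i z z' y, Hsupp y ->
    `|dotv (u i) (T z y - T z' y)| <= L i * `|dotv (u i) (z - z')|.

Definition coupling (dD : measure_display) (D : measurableType dD)
  (mu nu : probability D R) (gamma : probability (D * D)%type R) : Prop :=
  forall A : set D, measurable A ->
    gamma (fst @^-1` A) = mu A /\ gamma (snd @^-1` A) = nu A.

(* sa-HUC: Pufferfish scenario given by the conditional laws
   mu theta s = law of X given S = s under theta, pairs Q,
   and the set Hsupp of histories in the support. *)
Definition is_saHUC (Theta S : Type) (Q : set (S * S)%type)
  (mu : Theta -> S -> probability (n.-tuple Xbar) R) (Hsupp : set Hist)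
  (P : probability Omega R) (f : n.-tuple Xbar -> Hist -> Omega -> 'rV[R]_d)
  (m : nat) (u : 'I_m -> 'rV[R]_d) (h : 'I_m -> R) : Prop :=
  (forall i, 0 <= h i) /\
  forall (theta : Theta) (si sj : S), Q (si, sj) ->
  forall y, Hsupp y ->
  forall gamma : probability (n.-tuple Xbar * n.-tuple Xbar)%type R,
    coupling (mu theta si) (mu theta sj) gamma ->
    {ae gamma, forall XX' : n.-tuple Xbar * n.-tuple Xbar,
      forall i : 'I_m,
        (\int[P]_r ((`|dotv (u i) (f XX'.1 y r - f XX'.2 y r)| ^+ 2)%:E)
          <= (h i)%:E)%E}.

End SaHUC.
Arguments discrepancy {R dX Xbar n dO Omega}.

(* Main.v *)
Require Import Defs.
From HB Require Import structures.
From mathcomp Require Import all_boot all_order all_algebra.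
From mathcomp Require Import all_classical all_reals all_analysis.
From mathcomp Require Import ring lra measurable_realfun.
Import Order.TTheory GRing.Theory Num.Theory.
Local Open Scope classical_set_scope.
Local Open Scope ring_scope.

Section Alg.
Variables (R : realType) (d : nat).
Implicit Types u v w : 'rV[R]_d.

Lemma dotvD u v w : dotv u (v + w) = dotv u v + dotv u w.
Proof. rewrite /dotv -big_split; apply: eq_bigr => k _; rewrite !mxE mulrDr; done. Qed.
Lemma dotvN u v : dotv u (- v) = - dotv u v.
Proof. rewrite /dotv -sumrN; apply: eq_bigr => k _; rewrite !mxE mulrN; done. Qed.
Lemma dotvB u v w : dotv u (v - w) = dotv u v - dotv u w.
Proof. by rewrite dotvD dotvN. Qed.
Lemma dotvZ u k v : dotv u (k *: v) = k * dotv u v.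
Proof. rewrite /dotv mulr_sumr; apply: eq_bigr => k' _; rewrite !mxE mulrCA; done. Qed.
Lemma dotv_sum u (I : Type) (s : seq I) (F : I -> 'rV[R]_d) :
  dotv u (\sum_(j <- s) F j) = \sum_(j <- s) dotv u (F j).
Proof.
rewrite /dotv exchange_big /=; apply: eq_bigr => k _.
rewrite summxE mulr_sumr; done.
Qed.
Lemma dotvC u v : dotv u v = dotv v u.
Proof. by rewrite /dotv; apply: eq_bigr => k _; rewrite mulrC. Qed.
Lemma dotv_ge0 v : 0 <= dotv v v.
Proof. by rewrite /dotv sumr_ge0 // => k _; rewrite -expr2 sqr_ge0. Qed.

Lemma cs_unit u v : on_sphere u -> `|dotv u v| <= norm2 v.
Proof.
rewrite /on_sphere /norm2 => hu.
have uu : dotv u u = 1.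
  by move: hu => /(congr1 (fun x => x ^+ 2)); rewrite sqr_sqrtr ?dotv_ge0 // expr1n.
set a := dotv u v.
have h := dotv_ge0 (v - a *: u).
rewrite dotvB dotvZ (dotvC (v - _) v) (dotvC (v - _) u) !dotvB !dotvZ uu (dotvC v u) -/a in h.
have h2 : a ^+ 2 <= dotv v v by nra.
rewrite -(ger0_norm (sqrtr_ge0 (dotv v v))).
rewrite -ler_sqr ?nnegrE // (ger0_norm (sqrtr_ge0 _)) sqr_sqrtr ?dotv_ge0 // real_normK ?num_real //.
Qed.

Lemma clip_bound u C g : on_sphere u -> 0 < C -> `|dotv u (clip C g)| <= C.
Proof.
move=> hu hC; rewrite /clip dotvZ normrM.
have n0 : 0 <= norm2 g by exact: sqrtr_ge0.
have k0 : 0 <= Num.min 1 (C / norm2 g).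
  by rewrite le_min ler01 divr_ge0 // ltW.
rewrite (ger0_norm k0).
apply: (le_trans (ler_wpM2l k0 (cs_unit u g hu))).
have [->|nz] := eqVneq (norm2 g) 0; first by rewrite mulr0 ltW.
have km : Num.min 1 (C / norm2 g) <= C / norm2 g by rewrite ge_min lexx orbT.
apply: (le_trans (ler_wpM2r n0 km)).
by rewrite divfK.
Qed.


Lemma dotv0 u : dotv u 0 = 0.
Proof. by rewrite /dotv big1 // => k _; rewrite mxE mulr0. Qed.

Lemma diff_bound (dX : measure_display) (Xbar : measurableType dX) (n : nat)
  (Hist : Type) (dO : measure_display) (Omega : measurableType dO)
  u C (B : nat) (xi : Hist -> 'rV[R]_d) gradl (I : Omega -> seq 'I_n)
  (x x' : n.-tuple Xbar) y r :
  on_sphere u -> 0 < C -> (0 < B)%N ->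
  `|dotv u (minibatch_grad C B xi gradl I x y r - minibatch_grad C B xi gradl I x' y r)|
   <= 2 * C / B%:R * discrepancy I x x' r.
Proof.
move=> hu hC hB.
rewrite /minibatch_grad -scalerBr dotvZ -sumrB dotv_sum normrM.
have Bi : 0 <= (B%:R : R)^-1 by rewrite invr_ge0 ler0n.
rewrite (ger0_norm Bi).
have -> : 2 * C / B%:R * discrepancy I x x' r = B%:R^-1 * (2 * C * discrepancy I x x' r) by ring.
apply: ler_wpM2l => //.
apply: (le_trans (ler_norm_sum _ _ _)).
rewrite /discrepancy mulr_sumr; apply: ler_sum => j _.
case: eqVneq => [e|ne].
  by rewrite /clipped_grad e subrr dotv0 normr0 mulr0.
rewrite mulr1 dotvB; apply: (le_trans (ler_normB _ _)).
by rewrite mulr2n mulrDl mul1r lerD // clip_bound.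
Qed.
End Alg.

Lemma int_mono d0 (T : measurableType d0) (R : realType)
  (mu : {measure set T -> \bar R}) (f g : T -> \bar R) :
  (forall x, (0 <= f x)%E) -> (forall x, (f x <= g x)%E) ->
  (\int[mu]_x f x <= \int[mu]_x g x)%E.
Proof.
move=> f0 fg.
rewrite !ge0_integralTE //; last by move=> x; apply: le_trans (f0 x) (fg x).
apply: ge_ereal_sup => _ [h hf <-]; apply: ereal_sup_ubound; exists h => //= x.
exact: le_trans (hf x) (fg x).
Qed.

Lemma meas_compI d0 (Omega : measurableType d0) (R : realType) (n : nat)
  (I : Omega -> seq 'I_n) (F : seq 'I_n -> \bar R) :
  (forall s : seq 'I_n, measurable (I @^-1` [set s])) ->
  measurable_fun setT (fun r => F (I r)).
Proof.
move=> hI _ A mA; rewrite setTI.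
have -> : (fun r => F (I r)) @^-1` A = \bigcup_(s : seq 'I_n)
   (if `[< A (F s) >] then I @^-1` [set s] else set0).
  apply/seteqP; split => r.
    move=> Ar; exists (I r) => //.
    by rewrite asboolT.
  by move=> [s _]; case: asboolP => // As /= ->.
apply: countable_bigcupT_measurable; first exact: countableP.
by move=> s; case: asboolP => _; [exact: hI| exact: measurable0].
Qed.

Theorem proposition3 (R : realType) (d : nat)
  (dX : measure_display) (Xbar : measurableType dX) (n : nat)
  (Hist : Type) (dO : measure_display) (Omega : measurableType dO)
  (Theta S : Type) (Q : set (S * S)%type)
  (mu : Theta -> S -> probability (n.-tuple Xbar) R) (Hsupp : set Hist)
  (P : probability Omega R) (I : Omega -> seq 'I_n) (B : nat)
  (C : R) (xi : Hist -> 'rV[R]_d) (gradl : 'rV[R]_d -> Xbar -> 'rV[R]_d)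
  (T : 'rV[R]_d -> Hist -> 'rV[R]_d)
  (m : nat) (u : 'I_m -> 'rV[R]_d) (L : 'I_m -> R) (Kbar : R) :
  (forall i, on_sphere (u i)) ->
  0 < C ->
  (1 <= B)%N ->
  (forall r, size (I r) = B) ->
  (forall s : seq 'I_n, measurable (I @^-1` [set s])) ->
  slicewise_lipschitz u L T Hsupp ->
  (forall (theta : Theta) (si sj : S), Q (si, sj) ->
   forall y, Hsupp y ->
   forall gamma : probability (n.-tuple Xbar * n.-tuple Xbar)%type R,
     coupling (mu theta si) (mu theta sj) gamma ->
     {ae gamma, forall XX' : n.-tuple Xbar * n.-tuple Xbar,
       (\int[P]_r ((discrepancy I XX'.1 XX'.2 r) ^+ 2)%:E <= (Kbar ^+ 2)%:E)%E}) ->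
  is_saHUC Q mu Hsupp P (pre_noise_update T C B xi gradl I) u
    (fun i => (2 * L i * C / B%:R) ^+ 2 * Kbar ^+ 2).
Proof.
move=> hu hC hB hsz hI hL hK; split.
  by move=> i; apply: mulr_ge0; apply: sqr_ge0.
move=> theta si sj hQ y hy gamma hg.
have := hK theta si sj hQ y hy gamma hg.
apply: filterS => -[x x'] /= hXX i.
pose K := fun r : Omega => (discrepancy I x x' r : R).
set c := (2 * L i * C / B%:R) ^+ 2.
have K0 r : 0 <= K r by rewrite /K /discrepancy sumr_ge0.
have pw r : `|dotv (u i) (pre_noise_update T C B xi gradl I x y r -
      pre_noise_update T C B xi gradl I x' y r)| ^+ 2 <= c * K r ^+ 2.
  rewrite /pre_noise_update.
  set z := `|_|.
  have hz := hL i (minibatch_grad C B xi gradl I x y r)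
     (minibatch_grad C B xi gradl I x' y r) y hy.
  have hd := @diff_bound R d _ Xbar n Hist _ Omega (u i) C B xi gradl I x x' y r (hu i) hC hB.
  rewrite -/z in hz; rewrite -/(K r) in hd.
  set a := `|dotv _ _| in hz hd.
  have a0 : 0 <= a by apply: normr_ge0.
  have z0 : 0 <= z by apply: normr_ge0.
  have Bp : 0 < (B%:R : R) by rewrite ltr0n.
  set b := 2 * C / B%:R * K r in hd.
  have -> : c * K r ^+ 2 = (`|L i| * b) ^+ 2.
    rewrite [in RHS]exprMn real_normK ?num_real // /c /b; ring.
  have zb : z <= `|L i| * b.
    have [Lp|Ln] := lerP 0 (L i).
      rewrite ger0_norm //; apply: (le_trans hz); exact: ler_wpM2l.
    apply: (le_trans hz); apply: (@le_trans _ _ 0).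
      by rewrite mulr_le0_ge0 // ltW.
    by apply: mulr_ge0 => //; apply: le_trans hd.
  by rewrite lerXn2r // ?nnegrE //; apply: le_trans zb.
apply: (le_trans (@int_mono _ _ _ P _ (fun r => (c * K r ^+ 2)%:E) _ _)).
- by move=> r; rewrite lee_fin sqr_ge0.
- by move=> r; rewrite lee_fin.
rewrite (eq_integral (fun r => c%:E * (K r ^+ 2)%:E)%E); last by move=> r _; rewrite EFinM.
rewrite ge0_integralZl_EFin //.
- rewrite (EFinM c); apply: lee_wpmul2l; [by rewrite lee_fin /c sqr_ge0 | exact: hXX].
- by move=> r _; rewrite lee_fin sqr_ge0.
- exact: (@meas_compI _ Omega R n I (fun s => ((\sum_(j <- s) ((tnth x j != tnth x' j)%:R : R)) ^+ 2)%:E) hI).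
- exact: sqr_ge0.
Qed.
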